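(* Let $G^1$ be a 1-wconnected 1-graph with infinitely many boundary 1-nodes (not necessarily locally 1-finite). Suppose ${}^{*}G^1$ has a hypernode (of rank 0 or 1) that is not in its principal 1-galaxy $\Gamma_0^1$. Then there exist 1-galaxies $\Gamma_i^1$, $i\in\mathbb Z$, all different from $\Gamma_0^1$, such that for all integers $i<j$ the 1-galaxy $\Gamma_i^1$ is closer to $\Gamma_0^1$ than is $\Gamma_j^1$.
   Context: 1-graphs. A 1-graph $G^1=\{X^0,B,X^1\}$ consists of a graph $G^0=\{X^0,B\}$ (0-nodes, with branches as two-element sets) and 1-nodes. The 1-nodes are obtained by partitioning the 0-tips of $G^0$ (classes of eventually identical one-ended paths) into subsets, some augmented by a single 0-node (each 0-node used at most once). Wdistance. The wdistance $d(x,y)$ is the minimum ordinal length of a two-ended 0-walk or 1-walk terminating at $x$ and $y$. A finite 0-walk has length equal to its number of branch traversals; each 0-tip traversal contributes $\omega$; 1-walk lengths are natural sums. Thus $d<\omega^2$. $\oplus$ denotes the natural sum of ordinals. 1-wconnected: any two nodes are joined by such a walk. A 0-section is the subgraph of $G^0$ induced by a maximal set of pairwise path-connected branches. A boundary 1-node is a 1-node incident to at least two 0-sections. Enlargement. Fix a free ultrafilter $\mathcal F$ on $\mathbb N$. Hypernodes are classes $[x_n]$ of sequences of 0-nodes or of 1-nodes, modulo agreement on a set in $\mathcal F$. A standard hypernode is the class of a constant sequence. 1-galaxies. Hypernodes $[x_n],[y_n]$ are 1-limitedly distant if $\{n:d(x_n,y_n)\le\omega\cdot k\}\in\mathcal F$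 for some $k\in\mathbb N$. 1-galaxies are the equivalence classes of this relation together with the hyperbranches between their 0-hypernodes. The principal 1-galaxy $\Gamma_0^1$ contains the standard hypernodes. Closeness. For 1-galaxies $\Gamma_a^1,\Gamma_b^1\ne\Gamma_0^1$, $\Gamma^1_a$ is closer to $\Gamma_0^1$ than is $\Gamma_b^1$ if there exist $[y_n]\in\Gamma_a^1$, $[z_n]\in\Gamma_b^1$ and $[x_n]\in\Gamma_0^1$ with $\{n: d(z_n,x_n)\ge d(y_n,x_n)\oplus\omega\cdot m\}\in\mathcal F$ for every $m\in\mathbb N$. *)

(* Defs.v *)
From Stdlib Require Import ZArith List Classical ClassicalEpsilon Relations.

(* ---------- Ordinals below omega^2 :  (a,b) stands for omega*a + b ---------- *)
Definition ord2 : Type := (nat * nat)%type.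
Definition ole (o1 o2 : ord2) : Prop :=
  (fst o1 < fst o2)%nat \/ (fst o1 = fst o2 /\ (snd o1 <= snd o2)%nat).
(* natural (Hessenberg) sum *)
Definition osum (o1 o2 : ord2) : ord2 := (fst o1 + fst o2, snd o1 + snd o2)%nat.
Definition omega_mul (k : nat) : ord2 := (k, 0%nat).

Section ZeroGraph.
Variable V : Type.
Variable adj : V -> V -> Prop.

(* a one-ended path, listed by its 0-nodes *)
Definition is_path (p : nat -> V) : Prop :=
  (forall m n, p m = p n -> m = n) /\ (forall n, adj (p n) (p (S n))).

(* eventually identical one-ended paths (same 0-tip) *)
Definition tip_eq (p q : nat -> V) : Prop :=
  exists k l, forall n, p (k + n)%nat = q (l + n)%nat.

Definition conn0 : V -> V -> Prop := clos_refl_trans V adj.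
End ZeroGraph.

Record OneGraph := {
  V0 : Type;
  N1 : Type;
  adj : V0 -> V0 -> Prop;                      (* branches as two-element sets *)
  adj_sym : forall u v, adj u v -> adj v u;
  adj_irrefl : forall u, ~ adj u u;
  (* the 1-node to which (the 0-tip of) a one-ended path belongs *)
  tipnode : (nat -> V0) -> N1;
  tipnode_tip : forall p q, is_path V0 adj p -> is_path V0 adj q ->
                  tip_eq V0 p q -> tipnode p = tipnode q;
  (* each block of the partition of the 0-tips is nonempty *)
  node_nonempty : forall X : N1, exists p, is_path V0 adj p /\ tipnode p = X;
  (* the (optional) 0-node augmenting a 1-node; each 0-node used at most once *)
  embed : N1 -> option V0;
  embed_inj : forall X Y v, embed X = Some v -> embed Y = Some v -> X = Y
}.

Section OneGraphDefs.
Variable G : OneGraph.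

Definition node : Type := (V0 G + N1 G)%type.

(* end points of 0-walks: a 0-node or a 0-tip (given by a representative path) *)
Inductive point : Type :=
| PNode : V0 G -> point
| PTip : (nat -> V0 G) -> point.

(* node x "terminates" a 0-walk ending at point a *)
Definition holds (x : node) (a : point) : Prop :=
  match x, a with
  | inl v, PNode u => u = v
  | inl _, PTip _ => False
  | inr X, PNode u => embed G X = Some u
  | inr X, PTip p => is_path (V0 G) (adj G) p /\ tipnode G p = X
  end.

Inductive fwalk : V0 G -> V0 G -> nat -> Prop :=
| fw_nil : forall u, fwalk u u 0
| fw_cons : forall u w v k, adj G u w -> fwalk w v k -> fwalk u v (S k).

(* one-ended 0-walk starting at u and traversing the 0-tip of path p:
   a finite 0-walk followed by a one-ended path of that 0-tip *)
Definition owalk (u : V0 G) (p : nat -> V0 G) : Prop :=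
  is_path (V0 G) (adj G) p /\
  exists q, is_path (V0 G) (adj G) q /\ tip_eq (V0 G) q p /\ conn0 (V0 G) (adj G) u (q 0%nat).

(* a maximal 0-walk between two points, with its ordinal length *)
Definition seg (a b : point) (L : ord2) : Prop :=
  match a, b with
  | PNode u, PNode v => exists k, fwalk u v k /\ L = (0%nat, k)
  | PNode u, PTip p => owalk u p /\ L = omega_mul 1
  | PTip p, PNode u => owalk u p /\ L = omega_mul 1
  | PTip p, PTip q => (exists u, owalk u p /\ owalk u q) /\ L = omega_mul 2
  end.

(* a 1-walk starting at node x, currently ending at point b, of length L;
   consecutive 0-walks are joined at 1-nodes *)
Inductive wchain (x : node) : point -> ord2 -> Prop :=
| wc_start : forall a b L, holds x a -> seg a b L -> wchain x b L
| wc_step : forall b L1 X a b' L2, wchain x b L1 ->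
    holds (inr X) b -> holds (inr X) a -> seg a b' L2 ->
    wchain x b' (osum L1 L2).

Definition walk (x y : node) (L : ord2) : Prop :=
  (x = y /\ L = (0%nat, 0%nat)) \/ (exists b, wchain x b L /\ holds y b).

Definition is_wdist (x y : node) (o : ord2) : Prop :=
  walk x y o /\ forall o', walk x y o' -> ole o o'.

(* wdistance: the minimum length (well defined when x,y are 1-wconnected) *)
Definition wdist (x y : node) : ord2 :=
  epsilon (inhabits (0%nat, 0%nat)) (is_wdist x y).

Definition wconnected : Prop := forall x y : node, exists L, walk x y L.

Definition meets_section (X : N1 G) (v : V0 G) : Prop :=
  (embed G X = Some v /\ exists w, adj G v w) \/
  (exists p, is_path (V0 G) (adj G) p /\ tipnode G p = X /\ p 0%nat = v).

Definition boundary (X : N1 G) : Prop :=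
  exists u v, meets_section X u /\ meets_section X v /\ ~ conn0 (V0 G) (adj G) u v.

Definition infinitely_many_boundary : Prop :=
  ~ exists l : list (N1 G), forall X, boundary X -> In X l.

Definition free_ultrafilter (F : (nat -> Prop) -> Prop) : Prop :=
  F (fun _ => True) /\ ~ F (fun _ => False) /\
  (forall A B : nat -> Prop, (forall n, A n -> B n) -> F A -> F B) /\
  (forall A B, F A -> F B -> F (fun n => A n /\ B n)) /\
  (forall A, F A \/ F (fun n => ~ A n)) /\
  (forall k, ~ F (fun n => n = k)).

(* hypernodes are represented by sequences of nodes (classes modulo F) *)
Definition hyper : Type := nat -> node.

Definition lim_distant (F : (nat -> Prop) -> Prop) (u w : hyper) : Prop :=
  exists k, F (fun n => ole (wdist (u n) (w n)) (omega_mul k)).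

(* membership in the principal 1-galaxy: 1-limitedly distant from a standard hypernode *)
Definition in_principal (F : (nat -> Prop) -> Prop) (u : hyper) : Prop :=
  exists c : node, lim_distant F u (fun _ => c).

Definition closer (F : (nat -> Prop) -> Prop) (a b : hyper) : Prop :=
  exists y z x : hyper,
    lim_distant F y a /\ lim_distant F z b /\ in_principal F x /\
    forall m : nat,
      F (fun n => ole (osum (wdist (y n) (x n)) (omega_mul m)) (wdist (z n) (x n))).

End OneGraphDefs.

(* Main.v *)
Require Import Defs.
From Stdlib Require Import ZArith.
From Stdlib Require Import Arith Lia List Classical ClassicalEpsilon Relations.

Lemma least (P : nat -> Prop) : (exists n, P n) -> exists n, P n /\ forall m, P m -> n <= m.
Proof.
  intros [n Hn]. revert Hn. induction n as [n IH] using (well_founded_induction lt_wf).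
  intros Hn. destruct (classic (exists m, m < n /\ P m)) as [[m [Hm Pm]]|H].
  - apply (IH m Hm Pm).
  - exists n; split; auto. intros m Pm. destruct (le_lt_dec n m); auto.
    exfalso; apply H; eauto.
Qed.

Lemma ole_refl o : ole o o. Proof. unfold ole; lia. Qed.
Lemma ole_trans a b c : ole a b -> ole b c -> ole a c. Proof. unfold ole; lia. Qed.
Lemma ole_fst a b : ole a b -> fst a <= fst b. Proof. unfold ole; lia. Qed.
Lemma ole_osum_l A B C : ole A B -> ole (osum A C) (osum B C).
Proof. unfold ole, osum; simpl; lia. Qed.
Lemma ole_osum_r A B C : ole B C -> ole (osum A B) (osum A C).
Proof. unfold ole, osum; simpl; lia. Qed.
Lemma osum_assoc A B C : osum (osum A B) C = osum A (osum B C).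
Proof. destruct A, B, C; unfold osum; simpl; f_equal; lia. Qed.
Lemma osum_0l A : osum (0,0) A = A. Proof. destruct A; reflexivity. Qed.
Lemma osum_0r A : osum A (0,0) = A.
Proof. destruct A; unfold osum; simpl; rewrite !Nat.add_0_r; reflexivity. Qed.

Lemma sqrt_lb K x : 2*(K*K) <= x -> K <= Nat.sqrt (x/2).
Proof.
  intros H. pose proof (Nat.sqrt_spec (x/2) (Nat.le_0_l _)) as [H1 H2].
  assert (K*K <= x/2) by (apply Nat.div_le_lower_bound; lia).
  destruct (le_lt_dec K (Nat.sqrt (x/2))); auto. nia.
Qed.

Lemma arith1 (h : nat) (i : Z) (a M : nat) : h*h <= a/2 ->
  Z.to_nat (Z.abs i) + M + 1 <= h ->
  h * Z.to_nat (Z.of_nat h + i) <= a /\ M < h * Z.to_nat (Z.of_nat h + i).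
Proof.
  intros H1 H2.
  assert (Hq : Z.of_nat (Z.to_nat (Z.of_nat h + i)) = (Z.of_nat h + i)%Z) by (apply Z2Nat.id; lia).
  set (q := Z.to_nat (Z.of_nat h + i)) in *.
  assert (q <= 2*h /\ M + 1 <= q) by lia.
  assert (2*(a/2) <= a) by (apply Nat.Div0.mul_div_le).
  assert (h * q <= h * (2*h)) by (apply Nat.mul_le_mono_l; lia).
  assert (h * 1 <= h * q) by (apply Nat.mul_le_mono_l; lia).
  lia.
Qed.

Lemma arith2 (h : nat) (i j : Z) (a m : nat) : h*h <= a/2 ->
  Z.to_nat (Z.abs i) + Z.to_nat (Z.abs j) + m + 2 <= h -> (i < j)%Z ->
  h * Z.to_nat (Z.of_nat h + i) + 1 + m < h * Z.to_nat (Z.of_nat h + j) /\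
  h * Z.to_nat (Z.of_nat h + i) <= a /\ h * Z.to_nat (Z.of_nat h + j) <= a.
Proof.
  intros H1 H2 H3.
  assert (Hq : Z.of_nat (Z.to_nat (Z.of_nat h + i)) = (Z.of_nat h + i)%Z) by (apply Z2Nat.id; lia).
  assert (Hq' : Z.of_nat (Z.to_nat (Z.of_nat h + j)) = (Z.of_nat h + j)%Z) by (apply Z2Nat.id; lia).
  set (q := Z.to_nat (Z.of_nat h + i)) in *.
  set (q' := Z.to_nat (Z.of_nat h + j)) in *.
  assert (q <= 2*h /\ q' <= 2*h /\ q + 1 <= q') by lia.
  assert (2*(a/2) <= a) by (apply Nat.Div0.mul_div_le).
  assert (h * q <= h * (2*h)) by (apply Nat.mul_le_mono_l; lia).
  assert (h * q' <= h * (2*h)) by (apply Nat.mul_le_mono_l; lia).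
  assert (h * (q+1) <= h * q') by (apply Nat.mul_le_mono_l; lia).
  lia.
Qed.

Section H.
Variable G : OneGraph.

Lemma fwalk_app u v k1 : fwalk G u v k1 -> forall w k2, fwalk G v w k2 -> fwalk G u w (k1+k2).
Proof.
  induction 1; intros; simpl; [assumption|]. econstructor; [eassumption| apply IHfwalk; assumption].
Qed.

Lemma fwalk_conn u v k : fwalk G u v k -> conn0 (V0 G) (adj G) u v.
Proof.
  unfold conn0. induction 1. apply rt_refl. eapply rt_trans; [apply rt_step; eassumption | eassumption].
Qed.

Lemma conn0_sym u v : conn0 _ (adj G) u v -> conn0 _ (adj G) v u.
Proof.
  unfold conn0. induction 1. apply rt_step, adj_sym; auto. apply rt_refl. eapply rt_trans; eauto.
Qed.

Lemma owalk_ext u v p : conn0 _ (adj G) u v -> owalk G v p -> owalk G u p.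
Proof.
  intros Huv [Hp [q [Hq [Ht Hc]]]]. split; auto. exists q; split; [auto|split; [auto|]].
  unfold conn0 in *. eapply rt_trans; eauto.
Qed.

Lemma seg_merge a v b L1 L2 : seg G a (PNode G v) L1 -> seg G (PNode G v) b L2 ->
  exists L, seg G a b L /\ ole L (osum L1 L2).
Proof.
  destruct a as [u|p], b as [w|q]; simpl; intros H1 H2.
  - destruct H1 as [k1 [F1 E1]], H2 as [k2 [F2 E2]]; subst.
    exists (0,k1+k2). split. exists (k1+k2); split; auto. eapply fwalk_app; eauto.
    unfold ole, osum; simpl; lia.
  - destruct H1 as [k1 [F1 E1]], H2 as [O2 E2]; subst.
    exists (omega_mul 1). split. split; auto. eapply owalk_ext; eauto. eapply fwalk_conn; eauto.
    unfold ole,osum,omega_mul; simpl; lia.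
  - destruct H1 as [O1 E1], H2 as [k2 [F2 E2]]; subst.
    exists (omega_mul 1). split. split; auto. eapply owalk_ext; [|eauto].
    apply conn0_sym; eapply fwalk_conn; eauto.
    unfold ole,osum,omega_mul; simpl; lia.
  - destruct H1 as [O1 E1], H2 as [O2 E2]; subst.
    exists (omega_mul 2). split. split; [exists v; auto| reflexivity].
    unfold ole,osum,omega_mul; simpl; lia.
Qed.

Lemma seg_fst a b L : seg G a b L -> fst L <= 2.
Proof.
  destruct a, b; simpl; intros H.
  - destruct H as [k [_ E]]; subst; simpl; lia.
  - destruct H as [_ E]; subst; simpl; lia.
  - destruct H as [_ E]; subst; simpl; lia.
  - destruct H as [_ E]; subst; simpl; lia.
Qed.

Lemma chain_merge x b L1 : wchain G x b L1 -> forall v b2 L2, b = PNode G v ->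
  seg G (PNode G v) b2 L2 -> exists L, wchain G x b2 L /\ ole L (osum L1 L2).
Proof.
  intros H; destruct H as [a b L Ha Hs | b L1 X a b' L3 Hc HX Ha Hs];
    intros v b2 L2 E Hs2; subst.
  - destruct (seg_merge _ _ _ _ _ Hs Hs2) as [L' [Hs' Hle]].
    exists L'; split; auto. eapply wc_start; eauto.
  - destruct (seg_merge _ _ _ _ _ Hs Hs2) as [L' [Hs' Hle]].
    exists (osum L1 L'). split. eapply wc_step; eauto.
    rewrite osum_assoc. apply ole_osum_r; auto.
Qed.

Lemma app0 y b2 L2 : wchain G y b2 L2 -> forall v, y = inl v -> forall x b L1,
  wchain G x b L1 -> holds G (inl v) b -> exists L, wchain G x b2 L /\ ole L (osum L1 L2).
Proof.
  induction 1 as [a b L Ha Hs | b L0 X a b' L3 Hc IH HX Ha Hs];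
    intros v Ey x b0 L1 H1 Hh; subst y.
  - destruct a as [u|p]; simpl in Ha; [|contradiction]. subst u.
    destruct b0 as [u'|p']; simpl in Hh; [|contradiction]. subst u'.
    eapply chain_merge; eauto.
  - destruct (IH v eq_refl x b0 L1 H1 Hh) as [L [Hc' Hle]].
    exists (osum L L3). split. eapply wc_step; eauto.
    rewrite <- osum_assoc. apply ole_osum_l; auto.
Qed.

Lemma app1 y b2 L2 : wchain G y b2 L2 -> forall X, y = inr X -> forall x b L1,
  wchain G x b L1 -> holds G (inr X) b -> wchain G x b2 (osum L1 L2).
Proof.
  induction 1 as [a b L Ha Hs | b L0 X a b' L3 Hc IH HX Ha Hs];
    intros X0 Ey x b0 L1 H1 Hh; subst y.
  - exact (wc_step G x b0 L1 X0 a b L H1 Hh Ha Hs).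
  - rewrite <- osum_assoc. exact (wc_step G x b (osum L1 L0) X a b' L3 (IH X0 eq_refl x b0 L1 H1 Hh) HX Ha Hs).
Qed.

Lemma walk_app1 x X z L1 L2 : walk G x (inr X) L1 -> walk G (inr X) z L2 ->
  walk G x z (osum L1 L2).
Proof.
  intros [[E1 E2]|[b [Hc Hh]]] [[E3 E4]|[b2 [Hc2 Hh2]]].
  - subst. left; split; reflexivity.
  - subst x L1. rewrite osum_0l. right; exists b2; auto.
  - subst z L2. rewrite osum_0r. right; exists b; auto.
  - right. exists b2. split; auto. eapply app1; eauto.
Qed.

Lemma walk_app x y z L1 L2 : walk G x y L1 -> walk G y z L2 ->
  exists L, walk G x z L /\ ole L (osum L1 L2).
Proof.
  intros W1 W2. destruct y as [v|X].
  2: exists (osum L1 L2); split; [eapply walk_app1; eauto | apply ole_refl].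
  destruct W1 as [[E1 E2]|[b [Hc Hh]]].
  - subst. exists L2. rewrite osum_0l. split; auto; apply ole_refl.
  - destruct W2 as [[E3 E4]|[b2 [Hc2 Hh2]]].
    + subst. exists L1; rewrite osum_0r; split; [right; exists b; auto | apply ole_refl].
    + destruct (app0 _ _ _ Hc2 v eq_refl _ _ _ Hc Hh) as [L [HL Hle]].
      exists L; split; auto. right; exists b2; auto.
Qed.

Lemma wdist_spec x y : (exists L, walk G x y L) -> is_wdist G x y (wdist G x y).
Proof.
  intros [[n m] W].
  destruct (least (fun n => exists m, walk G x y (n,m))) as [n0 [[m1 W1] H0]]; [eauto|].
  destruct (least (fun m => walk G x y (n0,m))) as [m0 [W0 H1]]; [eauto|].
  unfold wdist. apply epsilon_spec. exists (n0,m0). split; auto.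
  intros [n' m'] W'. unfold ole; simpl. specialize (H0 n' (ex_intro _ m' W')).
  destruct (Nat.eq_dec n0 n'). subst; right; split; auto. left; lia.
Qed.

Lemma split_chain x b L : wchain G x b L -> forall y, holds G y b -> forall t,
  exists w P S, walk G x w P /\ walk G w y S /\ L = osum P S /\ fst P <= t /\
    Nat.min t (fst L) <= fst P + 1.
Proof.
  induction 1 as [a b L Ha Hs | b L1 X a b' L2 Hc IH HX Ha Hs]; intros y Hy t.
  - destruct (le_lt_dec (fst L) t).
    + exists y, L, (0,0). split. right; exists b; split; auto; eapply wc_start; eauto.
      split. left; split; reflexivity. split. rewrite osum_0r; auto. lia.
    + exists x, (0,0), L. split. left; split; reflexivity.
      split. right; exists b; split; [eapply wc_start; eauto| auto].
      split. rewrite osum_0l; auto. simpl. pose proof (seg_fst _ _ _ Hs). lia.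
  - pose proof (seg_fst _ _ _ Hs).
    assert (Ef : fst (osum L1 L2) = fst L1 + fst L2) by reflexivity.
    destruct (le_lt_dec (fst L1 + fst L2) t).
    + exists y, (osum L1 L2), (0,0). split. right; exists b'; split; [eapply wc_step; eauto | auto].
      split. left; split; reflexivity. split. symmetry; apply osum_0r. rewrite Ef; lia.
    + destruct (le_lt_dec (fst L1) t).
      * exists (inr X), L1, L2. split. right; exists b; split; auto.
        split. right; exists b'; split; [eapply wc_start; eauto|auto].
        split. reflexivity. rewrite Ef; lia.
      * destruct (IH (inr X) HX t) as [w [P [S [W1 [W2 [E [H1 H2]]]]]]].
        exists w, P, (osum S L2). split; auto. split.
        eapply walk_app1; [eexact W2|]. right; exists b'; split; [eapply wc_start; eauto | auto].
        split. rewrite E, osum_assoc; auto. rewrite Ef; lia.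
Qed.

Lemma split_walk x y L : walk G x y L -> forall t, exists w P S, walk G x w P /\
  walk G w y S /\ L = osum P S /\ fst P <= t /\ Nat.min t (fst L) <= fst P + 1.
Proof.
  intros [[E1 E2]|[b [Hc Hh]]] t.
  - subst. exists y, (0,0), (0,0). split. left; split; reflexivity.
    split. left; split; reflexivity. split. reflexivity. simpl; lia.
  - eapply split_chain; eauto.
Qed.

Hypothesis Hwc : wconnected G.

Lemma dwalk x y : walk G x y (wdist G x y).
Proof. destruct (wdist_spec x y (Hwc x y)); auto. Qed.
Lemma dle x y L : walk G x y L -> ole (wdist G x y) L.
Proof. intro W; apply (proj2 (wdist_spec x y (ex_intro _ L W))); auto. Qed.
Lemma tri x y z : ole (wdist G x z) (osum (wdist G x y) (wdist G y z)).
Proof.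
  destruct (walk_app _ _ _ _ _ (dwalk x y) (dwalk y z)) as [L [W Hle]].
  eapply ole_trans; [apply dle; eauto | auto].
Qed.
Lemma dself x : ole (wdist G x x) (omega_mul 0).
Proof. apply dle; left; split; reflexivity. Qed.

End H.

Theorem theorem11p2 (G : OneGraph) (F : (nat -> Prop) -> Prop) :
  free_ultrafilter F ->
  wconnected G ->
  infinitely_many_boundary G ->
  (exists u : hyper G, ~ in_principal G F u) ->
  exists g : Z -> hyper G,
    (forall i : Z, ~ in_principal G F (g i)) /\
    (forall i j : Z, (i < j)%Z -> closer G F (g i) (g j)).
Proof.
  intros HF Hwc Hinf [u Hu].
  destruct HF as [FT [FF [Fmono [Fand [Fult Ffree]]]]].
  pose (c := u 0%nat).
  pose (a := fun n => fst (wdist G (u n) c)).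
  assert (Hbig : forall M, F (fun n => M <= a n)).
  { intro M. destruct (Fult (fun n => ole (wdist G (u n) c) (omega_mul M))) as [H|H].
    - exfalso; apply Hu; exists c, M; exact H.
    - refine (Fmono _ _ _ H). intros n Hn. unfold a.
      unfold ole, omega_mul in Hn; simpl in Hn. lia. }
  pose (h := fun n => Nat.sqrt (a n / 2)).
  pose (sg := fun (i:Z) n => h n * Z.to_nat (Z.of_nat (h n) + i)).
  assert (Hsq : forall n, h n * h n <= a n / 2).
  { intro n. exact (proj1 (Nat.sqrt_spec _ (Nat.le_0_l _))). }
  assert (Hh : forall K, F (fun n => K <= h n)).
  { intro K. apply (Fmono (fun n => 2*(K*K) <= a n)); [|apply Hbig].
    intros n Hn. apply sqrt_lb; exact Hn. }
  assert (Hspec : forall (i:Z) n, exists w : node G,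
             sg i n <= a n -> sg i n <= fst (wdist G w c) <= sg i n + 1).
  { intros i n.
    destruct (split_walk G _ _ _ (dwalk G Hwc (u n) c) (a n - sg i n))
      as [w [P [S [W1 [W2 [E [H1 H2]]]]]]].
    exists w. intro Hs.
    assert (A1 : fst (wdist G w c) <= fst S) by (apply ole_fst, (dle G); auto).
    destruct (walk_app G _ _ _ _ _ W1 (dwalk G Hwc w c)) as [L [WL HL]].
    assert (A2 : ole (wdist G (u n) c) (osum P (wdist G w c)))
      by (eapply ole_trans; [apply (dle G); eauto| auto]).
    assert (A3 : a n = fst P + fst S) by (unfold a; rewrite E; reflexivity).
    rewrite E in A2, H2. apply ole_fst in A2. unfold osum in A2, H2; simpl in A2, H2.
    lia. }
  pose (g := fun i n => proj1_sig (constructive_indefinite_description _ (Hspec i n))).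
  assert (Hg : forall i n, sg i n <= a n -> sg i n <= fst (wdist G (g i n) c) <= sg i n + 1).
  { intros i n H. exact (proj2_sig (constructive_indefinite_description _ (Hspec i n)) H). }
  assert (LF1 : forall i M, F (fun n => sg i n <= a n /\ M < sg i n)).
  { intros i M. apply (Fmono (fun n => Z.to_nat (Z.abs i) + M + 1 <= h n)); [|apply Hh].
    intros n Hn. apply arith1; auto. }
  assert (LF2 : forall i j m, (i < j)%Z ->
    F (fun n => sg i n + 1 + m < sg j n /\ sg i n <= a n /\ sg j n <= a n)).
  { intros i j m Hij.
    apply (Fmono (fun n => Z.to_nat (Z.abs i) + Z.to_nat (Z.abs j) + m + 2 <= h n)); [|apply Hh].
    intros n Hn. apply arith2; auto. }
  exists g. split.
  - intros i [c' [k Hk]].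
    pose (l := fst (wdist G c' c)).
    apply FF.
    apply (Fmono (fun n => (sg i n <= a n /\ k + l < sg i n) /\
                           ole (wdist G (g i n) c') (omega_mul k))).
    + intros n [[Ha Hl] Ho]. pose proof (Hg i n Ha).
      pose proof (ole_fst _ _ (tri G Hwc (g i n) c' c)). apply ole_fst in Ho.
      unfold osum, omega_mul in *; simpl in *. unfold l in *; lia.
    + apply Fand; [apply LF1 | exact Hk].
  - intros i j Hij. exists (g i), (g j), (fun _ => c). split; [|split; [|split]].
    + exists 0. apply (Fmono (fun _ => True)); [intros n _; apply dself; auto|exact FT].
    + exists 0. apply (Fmono (fun _ => True)); [intros n _; apply dself; auto|exact FT].
    + exists c, 0. apply (Fmono (fun _ => True)); [intros n _; apply dself; auto|exact FT].
    + intros m.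
      apply (Fmono (fun n => sg i n + 1 + m < sg j n /\ sg i n <= a n /\ sg j n <= a n));
        [|apply LF2; auto].
      intros n [H1 [H2 H3]]. pose proof (Hg i n H2); pose proof (Hg j n H3).
      unfold ole, osum, omega_mul; simpl. lia.
Qed.
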